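(* Let $K>0$, $K\neq 1$, and let \[ A_6=\begin{pmatrix} K & K & 1\\ K & 1 & 1\\ 1 & 1 & 1\end{pmatrix}. \] Then $S(A_6)=XA_6X$ with $X=\operatorname{diag}(x,y,z)$, \[ y=\frac{1}{\sqrt{1+K^{1/3}+K^{2/3}}},\quad x=\frac{y}{K^{1/3}},\quad z=K^{1/3}y, \] and $S(A_6)$ is the circulant-type matrix \[ S(A_6)=\begin{pmatrix} a & b & c\\ b & c & a\\ c & a & b\end{pmatrix},\qquad a=\frac{K^{2/3}-K^{1/3}}{K-1},\quad b=\frac{K-K^{2/3}}{K-1},\quad c=\frac{K^{1/3}-1}{K-1}. \] Consequently, if $A_6^{(\ell)}=(a^{(\ell)}_{i,j})$ denotes the $\ell$th matrix of the alternate minimization sequence starting from $A_6$, then $\lim_{\ell\to\infty}\bigl((K-1)a^{(\ell)}_{1,3}+1\bigr)=K^{1/3}$, and similarly with $a^{(\ell)}_{2,2}$ or $a^{(\ell)}_{3,1}$ in place of $a^{(\ell)}_{1,3}$; for rational $K$ this gives sequences of rational numbers converging to $K^{1/3}$. Also $\lim_{K\to\infty}S(A_6)=\begin{pmatrix} 0&1&0\\1&0&0\\0&0&1\end{pmatrix}$.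
   Context: For a positive $n\times n$ matrix $A$, the Sinkhorn limit $S(A)$ is the unique doubly stochastic matrix of the form $XAY$ with $X,Y$ positive diagonal matrices; it is the limit of the alternate minimization sequence obtained from $A$ by alternately row scaling (dividing each row by its row sum) and column scaling (dividing each column by its column sum). For a positive symmetric matrix $A$ there is a unique positive diagonal $X$ with $S(A)=XAX$. *)

(* Defs.v *)
From HB Require Import structures.
From mathcomp Require Import all_boot all_order all_algebra.
From mathcomp Require Import all_classical all_reals all_analysis.
Set Implicit Arguments. Unset Strict Implicit. Unset Printing Implicit Defensive.
Import Order.TTheory GRing.Theory Num.Theory.
Local Open Scope classical_set_scope.
Local Open Scope ring_scope.

Section Sinkhorn.
Variable R : realType.

(* indices 1,2,3 of the paper are i0,i1,i2 *)
Definition i0 : 'I_3 := @Ordinal 3 0 isT.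
Definition i1 : 'I_3 := @Ordinal 3 1 isT.
Definition i2 : 'I_3 := @Ordinal 3 2 isT.

Definition mx3 (a b c d e f g h k : R) : 'M[R]_3 :=
  \matrix_(i < 3, j < 3)
     nth 0 (nth [::] [:: [:: a; b; c]; [:: d; e; f]; [:: g; h; k]] i) j.

Definition positive_mx n (A : 'M[R]_n) : Prop := forall i j, 0 < A i j.

Definition doubly_stochastic n (A : 'M[R]_n) : Prop :=
  (forall i j, 0 <= A i j) /\
  (forall i, \sum_j A i j = 1) /\ (forall j, \sum_i A i j = 1).

Definition pos_diag n (d : 'rV[R]_n) : Prop := forall i, 0 < d 0 i.

Definition sinkhorn_set n (A : 'M[R]_n) : set 'M[R]_n :=
  [set S | doubly_stochastic S /\
     exists dx dy : 'rV[R]_n, [/\ pos_diag dx, pos_diag dy &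
        S = diag_mx dx *m A *m diag_mx dy]].

(* Sinkhorn limit S(A): the (unique, for positive A) doubly stochastic
   matrix of the form X A Y *)
Definition sinkhorn n (A : 'M[R]_n) : 'M[R]_n := xget 0 (sinkhorn_set A).

Definition row_scale n (A : 'M[R]_n) : 'M[R]_n :=
  \matrix_(i, j) (A i j / \sum_k A i k).
Definition col_scale n (A : 'M[R]_n) : 'M[R]_n :=
  \matrix_(i, j) (A i j / \sum_k A k j).

(* alternate minimization sequence: A^(0) = A, A^(1) = row scaling of A,
   A^(2) = column scaling of A^(1), ... *)
Fixpoint altmin n (A : 'M[R]_n) (l : nat) : 'M[R]_n :=
  match l with
  | 0 => A
  | l'.+1 => if odd l' then col_scale (altmin A l') else row_scale (altmin A l')
  end.

Definition cbrt (K : R) : R := K `^ (3%:R)^-1.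

Definition A6 (K : R) : 'M[R]_3 := mx3 K K 1 K 1 1 1 1 1.

End Sinkhorn.

(* Main.v *)
Require Import Defs.
From HB Require Import structures.
From mathcomp Require Import all_boot all_order all_algebra.
From mathcomp Require Import all_classical all_reals all_analysis.
From mathcomp Require Import lra ring.
Import Order.TTheory GRing.Theory Num.Theory numFieldNormedType.Exports.
Local Open Scope classical_set_scope.
Local Open Scope ring_scope.

Section Gen.
Variable R : realType.

Lemma ex_argmax {I : finType} (i0 : I) (f : I -> R) : exists p, forall j, f j <= f p.
Proof.
case: (@arg_maxP _ R I i0 xpredT f isT) => p _ Hp.
by exists p => j; apply: Hp.
Qed.

Lemma ex_argmin {I : finType} (i0 : I) (f : I -> R) : exists p, forall j, f p <= f j.
Proof.
have [p Hp] := ex_argmax i0 (fun i => - f i).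
by exists p => j; have := Hp j; rewrite lerN2.
Qed.

Definition bnd (rho : 'I_3 -> R) (th : R) := forall a b, rho a <= th * rho b.

Lemma bnd_ex (rho : 'I_3 -> R) : (forall j, 0 < rho j) -> exists th, bnd rho th.
Proof.
move=> Hp.
have [p Hmax] := ex_argmax ord0 rho.
have [q Hmin] := ex_argmin ord0 rho.
exists (rho p / rho q) => a b.
have := Hp q; have := Hp b; have := Hmax a; have := Hmin b.
move=> h1 h2 h3 h4.
rewrite -mulrA (mulrC _ (rho b)) mulrA -(mulrA (rho p)).
apply: (le_trans h2).
rewrite -{1}(mulr1 (rho p)); apply: ler_wpM2l; first exact: ltW (lt_le_trans (Hp a) h2).
by rewrite ler_pdivlMr // mul1r.
Qed.

Lemma bnd_ge1 rho th : (forall j, 0 < rho j) -> bnd rho th -> 1 <= th.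
Proof.
move=> Hp Hb; have := Hb ord0 ord0; have := Hp ord0.
move=> h1 h2. by rewrite -(ler_pM2r h1) mul1r.
Qed.

Lemma contract (w : 'I_3 -> 'I_3 -> R) (d th : R) (rho : 'I_3 -> R) :
  0 < d -> (forall i j, d <= w i j) -> (forall i, \sum_j w i j = 1) ->
  (forall j, 0 < rho j) -> 1 <= th -> bnd rho th ->
  forall a b, \sum_j w b j * rho j <= (1 + (1 - 2 * d) * (th - 1)) * \sum_j w a j * rho j.
Proof.
move=> d0 Hd Hs Hp th1 Hb a b.
have [p Hmax] := ex_argmax ord0 rho.
have [q Hmin] := ex_argmin ord0 rho.
have d3 : 3 * d <= 1.
  rewrite -[X in _ <= X](Hs ord0); apply: le_trans (ler_sum _ (fun j _ => Hd ord0 j)).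
  rewrite sumr_const card_ord -mulr_natl; lra.
set M := rho p. set m := rho q.
have Mm : m <= M := le_trans (Hmin p) (le_refl _).
have m0 : 0 < m := Hp q.
have MT : M <= th * m := Hb p q.
have e1 : M - \sum_j w b j * rho j = \sum_j w b j * (M - rho j).
  under [in RHS]eq_bigr do rewrite mulrBr.
  by rewrite sumrB -mulr_suml Hs mul1r.
have e2 : \sum_j w a j * rho j - m = \sum_j w a j * (rho j - m).
  under [in RHS]eq_bigr do rewrite mulrBr.
  by rewrite sumrB -mulr_suml Hs mul1r.
have wpos : forall i j, 0 <= w i j by move=> i j; exact: le_trans (ltW d0) (Hd i j).
have f1 : d * (M - m) <= M - \sum_j w b j * rho j.
  rewrite e1 (bigD1 q) //=.
  apply: (@le_trans _ _ (w b q * (M - m))).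
    by apply: ler_wpM2r; [rewrite subr_ge0 | exact: Hd].
  rewrite lerDl; apply: sumr_ge0 => j _; apply: mulr_ge0 => //.
  by rewrite subr_ge0; exact: Hmax.
have f2 : d * (M - m) <= \sum_j w a j * rho j - m.
  rewrite e2 (bigD1 p) //=.
  apply: (@le_trans _ _ (w a p * (M - m))).
    by apply: ler_wpM2r; [rewrite subr_ge0 | exact: Hd].
  rewrite lerDl; apply: sumr_ge0 => j _; apply: mulr_ge0 => //.
  by rewrite subr_ge0; exact: Hmin.
move: f1 f2; set sb := \sum_j w b j * rho j; set sa := \sum_j w a j * rho j.
move=> f1 f2.
have c0 : 0 <= 1 - 2 * d by lra.
have th' : 1 <= 1 + (1 - 2 * d) * (th - 1) by rewrite lerDl; apply: mulr_ge0; lra.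
have sa0 : 0 < sa by nra.
have h3 : (1 - 2 * d) * (M - m) <= (1 - 2 * d) * (th - 1) * m.
  rewrite -mulrA; apply: ler_wpM2l => //; lra.
set t' := 1 + (1 - 2 * d) * (th - 1) in th' h3 *.
have h4 : t' * (m + d * (M - m)) <= t' * sa.
  apply: ler_wpM2l; lra.
have h5 : 0 <= (t' - 1) * (d * (M - m)).
  apply: mulr_ge0; first lra. apply: mulr_ge0; lra.
have h6 : t' * m = m + (1 - 2 * d) * (th - 1) * m by rewrite /t'; ring.
lra.
Qed.

Lemma geo0 {q : R} : 0 <= q < 1 -> (q ^+ n) @[n --> \oo] --> (0 : R).
Proof.
move=> /andP [q0 q1]; apply: cvg_expr; rewrite ger0_norm //.
Qed.

Lemma geo_term {q : R} (C : R) : 0 <= q < 1 -> (q ^+ n * C) @[n --> \oo] --> (0 : R).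
Proof. by move=> hq; rewrite -(mul0r C); apply: cvgMl; exact: geo0. Qed.

Lemma geo_le (q C r : R) : 0 <= q < 1 -> (forall n, r <= 1 + q ^+ n * C) -> r <= 1.
Proof.
move=> hq Hn; rewrite leNgt; apply/negP => r1.
have h : (1 + q ^+ n * C) @[n --> \oo] --> (1 : R).
  rewrite -[X in _ --> X](addr0 1); apply: cvgD; first exact: cvg_cst.
  exact: geo_term.
have [n Hn'] := filter_ex (cvgr_lt _ h _ r1).
by have := Hn n; rewrite leNgt Hn'.
Qed.

Lemma geo_cvg (q C L : R) (f : nat -> R) : 0 <= q < 1 ->
  (forall n, `|f n - L| <= q ^+ n * C) -> f n @[n --> \oo] --> L.
Proof.
move=> hq Hn.
have h := geo_term C hq.
apply/cvgrPdist_lt => e e0.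
move/cvgr0Pnorm_lt : h => /(_ e e0) H1.
near=> n. have H := near H1 n.
rewrite distrC; apply: le_lt_trans (Hn n) _.
exact: le_lt_trans (ler_norm _) (H _).
Unshelve. all: by end_near.
Qed.
End Gen.
Arguments bnd {R}. Arguments contract {R}. Arguments geo_le {R}. Arguments geo_cvg {R}. Arguments bnd_ex {R}. Arguments bnd_ge1 {R}. Arguments geo_term {R}.
Section SK.
Variable R : realType.
Variable K : R.
Hypothesis hK0 : 0 < K.
Hypothesis hK1 : K != 1.

Definition tK := cbrt K.
Definition sK := 1 + tK + tK ^+ 2.
Definition yK := (Num.sqrt sK)^-1.
Definition xK := yK / tK.
Definition zK := tK * yK.
Definition u (i : 'I_3) : R := nth 0 [:: xK; yK; zK] i.
Definition Am := A6 K.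

Lemma Aval i j : Am i j = nth 0 (nth [::] [:: [:: K; K; 1]; [:: K; 1; 1]; [:: 1; 1; 1]] i) j.
Proof. by rewrite /Am /A6 /mx3 mxE. Qed.

Lemma t_gt0 : 0 < tK.
Proof. exact: powR_gt0. Qed.

Lemma t3 : tK ^+ 3 = K.
Proof.
rewrite /tK /cbrt -powR_mulrn ?powR_ge0 // -powRrM mulVf.
  by rewrite powRr1 // ltW.
by rewrite pnatr_eq0.
Qed.

Lemma t_neq1 : tK != 1.
Proof. by apply: contra hK1 => /eqP h; rewrite -t3 h expr1n. Qed.

Lemma s_gt0 : 0 < sK.
Proof. have := t_gt0; rewrite /sK => h; nra. Qed.

Lemma y2 : yK ^+ 2 = sK^-1.
Proof. by rewrite /yK exprVn sqr_sqrtr // ltW // s_gt0. Qed.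

Lemma y_gt0 : 0 < yK.
Proof. by rewrite /yK invr_gt0 sqrtr_gt0 s_gt0. Qed.

Lemma u_gt0 i : 0 < u i.
Proof.
have := y_gt0; have := t_gt0.
case: i => [[|[|[|i]]] Hi] //= h1 h2; rewrite /xK /zK.
- exact: divr_gt0.
- exact: mulr_gt0.
Qed.

Lemma A_gt0 i j : 0 < Am i j.
Proof. by rewrite Aval; case: i => [[|[|[|i]]] Hi] //; case: j => [[|[|[|j]]] Hj]. Qed.

Lemma A_sym i j : Am i j = Am j i.
Proof. by rewrite !Aval; case: i => [[|[|[|i]]] Hi] //; case: j => [[|[|[|j]]] Hj]. Qed.

Lemma sum3 (f : 'I_3 -> R) : \sum_j f j = f ord0 + f (Ordinal (isT : 1 < 3)%N) + f (Ordinal (isT : 2 < 3)%N).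
Proof. rewrite !big_ord_recr big_ord0 /= add0r. congr (_ + _ + _); congr f; exact: val_inj. Qed.

Lemma tne0 : tK != 0.
Proof. exact: lt0r_neq0 t_gt0. Qed.

Lemma uAu i : u i * \sum_j Am i j * u j = 1.
Proof.
apply: (@eq_trans _ _ (yK^+2 * sK)); last by rewrite y2 mulVf // gt_eqF // s_gt0.
have h := tne0.
rewrite sum3 !Aval /u /xK /zK /sK -t3.
case: i => [[|[|[|i]]] Hi] //=; field => //.
Qed.
Definition Fv (v : 'I_3 -> R) (i : 'I_3) : R := (\sum_j Am i j * v j)^-1.
Definition wK (i j : 'I_3) : R := Am i j * u i * u j.
Definition pmin : 'I_3 * 'I_3 := Order.arg_min (ord0, ord0) xpredT (fun p => wK p.1 p.2).
Definition dK := wK pmin.1 pmin.2.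
Definition cK := 1 - 2 * dK.

Lemma w_gt0 i j : 0 < wK i j.
Proof. by rewrite /wK !mulr_gt0 ?A_gt0 ?u_gt0. Qed.

Lemma dK_le i j : dK <= wK i j.
Proof.
rewrite /dK /pmin; case: (@arg_minP _ R _ (ord0, ord0) xpredT (fun p => wK p.1 p.2) isT).
by move=> p _ Hp; apply: (Hp (i, j)).
Qed.

Lemma dK_gt0 : 0 < dK.
Proof. exact: w_gt0. Qed.

Lemma w_sum i : \sum_j wK i j = 1.
Proof.
rewrite -(uAu i) mulr_sumr; apply: eq_bigr => j _; rewrite /wK; ring.
Qed.

Lemma cK_range : 0 <= cK < 1.
Proof.
have d3 : 3 * dK <= 1.
  rewrite -[X in _ <= X](w_sum ord0); apply: le_trans (ler_sum _ (fun j _ => dK_le ord0 j)).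
  rewrite sumr_const card_ord -mulr_natl; lra.
have := dK_gt0; rewrite /cK => h; apply/andP; split; lra.
Qed.

Lemma sum_gt0 (f : 'I_3 -> R) : (forall j, 0 < f j) -> 0 < \sum_j f j.
Proof. move=> h; rewrite sum3; have := h ord0; have := h (Ordinal (isT : 1 < 3)%N); have := h (Ordinal (isT : 2 < 3)%N); lra. Qed.

Lemma Fv_rho (rho : 'I_3 -> R) j :
  Fv (fun k => u k * rho k) j / u j = (\sum_k wK j k * rho k)^-1.
Proof.
rewrite /Fv -invfM; congr (_^-1); rewrite mulrC mulr_sumr; apply: eq_bigr => k _.
rewrite /wK; ring.
Qed.

Lemma Fstep (rho : 'I_3 -> R) th : (forall j, 0 < rho j) -> 1 <= th -> bnd rho th ->
  bnd (fun j => Fv (fun k => u k * rho k) j / u j) (1 + cK * (th - 1)).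
Proof.
move=> hp th1 hb a b; rewrite !Fv_rho.
have sp : forall i, 0 < \sum_k wK i k * rho k.
  by move=> i; apply: sum_gt0 => k; rewrite mulr_gt0 ?w_gt0.
have H := contract _ _ _ _ dK_gt0 dK_le w_sum hp th1 hb a b.
have th' : 0 < 1 + cK * (th - 1).
  have := cK_range => /andP [c0 _]; have : 0 <= cK * (th - 1) by apply: mulr_ge0; lra.
  lra.
by rewrite ler_pdivlMr // mulrC ler_pdivrMr //.
Qed.
Lemma entry_est (rho : 'I_3 -> R) th i j : (forall k, 0 < rho k) -> 1 <= th -> bnd rho th ->
  `|u i * rho i / (\sum_k Am j k * (u k * rho k)) - u i * u j| <= (th - 1) * (u i * u j).
Proof.
move=> hp th1 hb.
set D := \sum_k Am j k * (u k * rho k).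
set P := \sum_k Am j k * u k.
have uP : u j * P = 1 := uAu j.
have P0 : 0 < P by apply: sum_gt0 => k; rewrite mulr_gt0 ?A_gt0 ?u_gt0.
have D0 : 0 < D by apply: sum_gt0 => k; rewrite !mulr_gt0 ?A_gt0 ?u_gt0.
have Dup : D <= th * rho i * P.
  rewrite /D /P mulr_sumr; apply: ler_sum => k _.
  have := hb k i; have := A_gt0 j k; have := u_gt0 k; have := hp k.
  move=> h1 h2 h3 h4.
  have h5 : 0 < Am j k * u k by rewrite mulr_gt0.
  have := ler_wpM2l (ltW h5) h4. move=> h6. 
  rewrite mulrA (mulrC _ (Am j k * u k)). lra.
have Dlo : rho i * P <= th * D.
  rewrite /D /P !mulr_sumr; apply: ler_sum => k _.
  have := hb i k; have := A_gt0 j k; have := u_gt0 k; have := hp k.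
  move=> h1 h2 h3 h4.
  have h5 : 0 < Am j k * u k by rewrite mulr_gt0.
  have := ler_wpM2l (ltW h5) h4. move=> h6.
  have -> : th * (Am j k * (u k * rho k)) = Am j k * u k * (th * rho k) by ring.
  rewrite mulrC; exact: h6.
set S := u i * u j.
have S0 : 0 < S by rewrite mulr_gt0 ?u_gt0.
set E := u i * rho i / D.
have eE : E * D = u i * rho i by rewrite /E mulrVK // unitfE gt_eqF.
have E0 : 0 < E by rewrite /E !mulr_gt0 ?u_gt0 ?invr_gt0.
have h1 : E <= th * S.
  rewrite -(ler_pM2r D0) eE.
  have := ler_wpM2l (ltW S0) Dlo.
  have -> : S * (rho i * P) = u i * rho i by rewrite /S -[RHS]mulr1 -uP; ring.
  by rewrite mulrCA mulrA.
have h2 : S <= th * E.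
  rewrite -(ler_pM2r D0) -[th * E * D]mulrA eE.
  have := ler_wpM2l (ltW S0) Dup.
  have -> : S * (th * rho i * P) = th * (u i * rho i) by rewrite /S -[RHS]mulr1 -uP; ring.
  done.
have h3 : 0 <= (th - 1) ^+ 2 * S by rewrite mulr_ge0 ?sqr_ge0 // ltW.
rewrite ler_norml; apply/andP; split; last by lra.
have h4 : 0 <= th * (E - (2 - th) * S) by nra.
have : 0 <= E - (2 - th) * S.
  by move: h4; rewrite pmulr_rge0 //; lra.
lra.
Qed.

Fixpoint vs (k : nat) : 'I_3 -> R :=
  if k is k'.+1 then Fv (vs k') else (fun _ => 1).

Definition rhoK k (j : 'I_3) := vs k j / u j.

Lemma vs_gt0 k j : 0 < vs k j.
Proof.
elim: k j => [|k IH] j //=.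
by rewrite /Fv invr_gt0; apply: sum_gt0 => i; rewrite mulr_gt0 ?A_gt0 ?IH.
Qed.

Lemma rho_gt0 k j : 0 < rhoK k j.
Proof. by rewrite /rhoK divr_gt0 ?vs_gt0 ?u_gt0. Qed.

Lemma vs_eq k : vs k = (fun j => u j * rhoK k j).
Proof.
apply: funext => j; rewrite /rhoK mulrC mulfVK //; exact: lt0r_neq0 (u_gt0 j).
Qed.

Lemma vs_bnd : exists th0, 1 <= th0 /\ forall k, bnd (rhoK k) (1 + cK ^+ k * (th0 - 1)).
Proof.
have [th0 H0] := bnd_ex (rhoK 0) (rho_gt0 0).
have th1 := bnd_ge1 _ _ (rho_gt0 0) H0.
exists th0; split => // k; elim: k => [|k IH].
  by rewrite expr0 mul1r addrC subrK.
have c0 : 0 <= cK by case/andP: cK_range.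
have t1 : 1 <= 1 + cK ^+ k * (th0 - 1).
  by rewrite lerDl mulr_ge0 ?exprn_ge0 // subr_ge0.
have := Fstep _ _ (rho_gt0 k) t1 IH.
rewrite -vs_eq /= exprS.
have -> : 1 + cK * (1 + cK ^+ k * (th0 - 1) - 1) = 1 + cK * cK ^+ k * (th0 - 1) by ring.
done.
Qed.
Lemma vs_neq0 k j : vs k j != 0.
Proof. exact: lt0r_neq0 (vs_gt0 k j). Qed.

Lemma Fv_neq0 k j : \sum_i Am j i * vs k i != 0.
Proof. by apply: lt0r_neq0; apply: sum_gt0 => i; rewrite mulr_gt0 ?A_gt0 ?vs_gt0. Qed.

Lemma altmin_form l i j : altmin (A6 K) l.+1 i j =
  Am i j * vs (if odd l then l else l.+1) i * vs (if odd l then l.+1 else l) j.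
Proof.
elim: l i j => [|l IH] i j.
  rewrite /= /row_scale mxE /Fv mulr1; congr (_ * _^-1).
  by apply: eq_bigr => k _; rewrite mulr1.
have -> : altmin (A6 K) l.+2 = if odd l.+1 then col_scale (altmin (A6 K) l.+1)
   else row_scale (altmin (A6 K) l.+1) by [].
move: IH; set M := altmin (A6 K) l.+1 => IH.
rewrite -[odd l.+1]/(~~ odd l).
case hl: (odd l).
- change (row_scale M i j = Am i j * Fv (vs l.+1) i * vs l.+1 j).
  rewrite /row_scale mxE.
  have e : \sum_k M i k = vs l i * \sum_k Am i k * vs l.+1 k.
    rewrite mulr_sumr; apply: eq_bigr => k _; rewrite IH hl; ring.
  rewrite e IH hl /Fv.
  have := vs_neq0 l i; have := Fv_neq0 l.+1 i => h1 h2.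
  field; by rewrite h1 h2.
- change (col_scale M i j = Am i j * vs l.+1 i * Fv (vs l.+1) j).
  rewrite /col_scale mxE.
  have e : \sum_k M k j = vs l j * \sum_k Am j k * vs l.+1 k.
    rewrite mulr_sumr; apply: eq_bigr => k _; rewrite IH hl A_sym; ring.
  rewrite e IH hl /Fv.
  have := vs_neq0 l j; have := Fv_neq0 l.+1 j => h1 h2.
  field; by rewrite h1 h2.
Qed.
Lemma altmin_cvg i j :
  (altmin (A6 K) l.+1 i j) @[l --> \oo] --> Am i j * u i * u j.
Proof.
have [th0 [th1 Hb]] := vs_bnd.
apply: (geo_cvg cK (Am i j * (th0 - 1) * (u i * u j)) _ _ cK_range) => l.
have c0 : 0 <= cK by case/andP: cK_range.
have t1 : 1 <= 1 + cK ^+ l * (th0 - 1).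
  by rewrite lerDl mulr_ge0 ?exprn_ge0 // subr_ge0.
have A0 : 0 <= Am i j := ltW (A_gt0 i j).
rewrite altmin_form; case: (odd l); rewrite [vs l.+1 _]/= /Fv (vs_eq l).
- have h := entry_est _ _ i j (rho_gt0 l) t1 (Hb l).
  set D := \sum_k Am j k * (u k * rhoK l k) in h *.
  have -> : Am i j * (u i * rhoK l i) * D^-1 - Am i j * u i * u j =
    Am i j * (u i * rhoK l i / D - u i * u j) by ring.
  rewrite normrM ger0_norm //.
  have -> : cK ^+ l * (Am i j * (th0 - 1) * (u i * u j)) =
    Am i j * ((1 + cK ^+ l * (th0 - 1) - 1) * (u i * u j)) by ring.
  exact: ler_wpM2l.
- have h := entry_est _ _ j i (rho_gt0 l) t1 (Hb l).
  set D := \sum_k Am i k * (u k * rhoK l k) in h *.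
  have -> : Am i j * D^-1 * (u j * rhoK l j) - Am i j * u i * u j =
    Am i j * (u j * rhoK l j / D - u j * u i) by ring.
  rewrite normrM ger0_norm //.
  have -> : cK ^+ l * (Am i j * (th0 - 1) * (u i * u j)) =
    Am i j * ((1 + cK ^+ l * (th0 - 1) - 1) * (u j * u i)) by ring.
  exact: ler_wpM2l.
Qed.
Definition dvec : 'rV[R]_3 := \row_(i < 3) nth 0 [:: xK; yK; zK] i.

Lemma DAD_E (dx dy : 'rV[R]_3) i j :
  (diag_mx dx *m Am *m diag_mx dy) i j = dx 0 i * Am i j * dy 0 j.
Proof. by rewrite mul_mx_diag mul_diag_mx !mxE. Qed.

Lemma XAX_E i j : (diag_mx dvec *m Am *m diag_mx dvec) i j = u i * Am i j * u j.
Proof. by rewrite DAD_E !mxE. Qed.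

Lemma XAX_in : sinkhorn_set Am (diag_mx dvec *m Am *m diag_mx dvec).
Proof.
split; last first.
  by exists dvec, dvec; split => // i; rewrite mxE; exact: (u_gt0 i).
split; [|split].
- by move=> i j; rewrite XAX_E !mulr_ge0 // ltW ?u_gt0 ?A_gt0.
- move=> i; under eq_bigr do rewrite XAX_E.
  rewrite -(uAu i) mulr_sumr; apply: eq_bigr => j _; ring.
- move=> j; under eq_bigr do rewrite XAX_E.
  rewrite -(uAu j) mulr_sumr; apply: eq_bigr => i _; rewrite A_sym; ring.
Qed.

Lemma sink_unique S : sinkhorn_set Am S -> S = diag_mx dvec *m Am *m diag_mx dvec.
Proof.
case=> [[_ [Hrow Hcol]] [dx [dy [px py eS]]]].
set fx := fun j => dx 0 j. set fy := fun j => dy 0 j.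
have fx0 : forall j, 0 < fx j := px.
have fy0 : forall j, 0 < fy j := py.
have sp : forall (f : 'I_3 -> R) i, (forall j, 0 < f j) -> 0 < \sum_j Am i j * f j.
  by move=> f i hf; apply: sum_gt0 => j; rewrite mulr_gt0 ?A_gt0.
have ex : forall i, fx i = Fv fy i.
  move=> i; have := Hrow i; rewrite eS.
  under eq_bigr do rewrite DAD_E.
  move=> h.
  have h' : fx i * \sum_j Am i j * fy j = 1.
    by rewrite -h mulr_sumr; apply: eq_bigr => j _; rewrite /fx /fy; ring.
  have := sp fy i fy0 => hp.
  have hS := lt0r_neq0 hp.
  by rewrite /Fv -[LHS]mulr1 -(mulfV hS) mulrA h' mul1r.
have ey : forall j, fy j = Fv fx j.
  move=> j; have := Hcol j; rewrite eS.
  under eq_bigr do rewrite DAD_E.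
  move=> h.
  have h' : fy j * \sum_i Am j i * fx i = 1.
    by rewrite -h mulr_sumr; apply: eq_bigr => i _; rewrite /fx /fy A_sym; ring.
  have := sp fx j fx0 => hp.
  have hS := lt0r_neq0 hp.
  by rewrite /Fv -[LHS]mulr1 -(mulfV hS) mulrA h' mul1r.
set rho := fun j => fx j / u j.
have rho0 : forall j, 0 < rho j by move=> j; rewrite /rho divr_gt0 ?fx0 ?u_gt0.
have fxe : fx = (fun j => u j * rho j).
  apply: funext => j; rewrite /rho mulrC mulfVK //; exact: lt0r_neq0 (u_gt0 j).
set rho' := fun j => fy j / u j.
have rho0' : forall j, 0 < rho' j by move=> j; rewrite /rho' divr_gt0 ?fy0 ?u_gt0.
have fye : fy = (fun j => u j * rho' j).
  apply: funext => j; rewrite /rho' mulrC mulfVK //; exact: lt0r_neq0 (u_gt0 j).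
have step2 : forall th, 1 <= th -> bnd rho th -> bnd rho (1 + cK ^+ 2 * (th - 1)).
  move=> th th1 hb.
  have c0 : 0 <= cK by case/andP: cK_range.
  have hb' : bnd rho' (1 + cK * (th - 1)).
    have := Fstep _ _ rho0 th1 hb; rewrite -fxe.
    by move=> H a b; have := H a b; rewrite /rho' -!ey.
  have t1 : 1 <= 1 + cK * (th - 1) by rewrite lerDl mulr_ge0 // subr_ge0.
  have := Fstep _ _ rho0' t1 hb'; rewrite -fye.
  move=> H a b; have := H a b; rewrite /rho -!ex.
  by have -> : 1 + cK * (1 + cK * (th - 1) - 1) = 1 + cK ^+ 2 * (th - 1) by ring.
have [th0 H0] := bnd_ex rho rho0.
have th1 := bnd_ge1 _ _ rho0 H0.
have Hn : forall n, bnd rho (1 + (cK ^+ 2) ^+ n * (th0 - 1)).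
  elim=> [|n IH]; first by rewrite expr0 mul1r addrC subrK.
  have t1 : 1 <= 1 + (cK ^+ 2) ^+ n * (th0 - 1).
    rewrite lerDl; apply: mulr_ge0; last by rewrite subr_ge0.
    by apply: exprn_ge0; exact: sqr_ge0.
  have := step2 _ t1 IH.
  by have -> : 1 + cK ^+ 2 * (1 + (cK ^+ 2) ^+ n * (th0 - 1) - 1) =
     1 + (cK ^+ 2) ^+ n.+1 * (th0 - 1) by rewrite [(cK ^+ 2) ^+ n.+1]exprS; ring.
have q2 : 0 <= cK ^+ 2 < 1.
  case/andP: cK_range => c0 c1; apply/andP; split; first exact: sqr_ge0.
  by rewrite expr2; nra.
have rle : forall a b, rho a <= rho b.
  move=> a b.
  have : rho a / rho b <= 1.
    apply: (geo_le _ (th0 - 1) _ q2) => n.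
    by rewrite ler_pdivrMr // ?rho0 //; exact: Hn.
  by rewrite ler_pdivrMr ?rho0 // mul1r.
have rc : forall j, rho j = rho ord0 by move=> j; apply/eqP; rewrite eq_le !rle.
set lam := rho ord0.
have lam0 : 0 < lam := rho0 ord0.
have fxj : forall j, fx j = u j * lam by move=> j; rewrite fxe rc.
have fyj : forall j, fy j = u j / lam.
  move=> j; rewrite ey /Fv.
  have -> : \sum_k Am j k * fx k = lam * \sum_k Am j k * u k.
    by rewrite mulr_sumr; apply: eq_bigr => k _; rewrite fxj; ring.
  have := uAu j => h.
  have hu : u j != 0 := lt0r_neq0 (u_gt0 j).
  have hP : \sum_k Am j k * u k != 0.
    by apply: lt0r_neq0; apply: sp => k; exact: u_gt0.
  have uj : u j = (\sum_k Am j k * u k)^-1.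
    by rewrite -[LHS]mulr1 -(mulfV hP) mulrA h mul1r.
  by rewrite uj invfM mulrC.
apply/matrixP => i j; rewrite eS DAD_E XAX_E.
have := fxj i; have := fyj j; rewrite /fx /fy => -> ->.
by field; exact: lt0r_neq0.
Qed.
Lemma XAX_g i j : u i * Am i j * u j =
  yK ^+ 2 * nth 0 (nth [::] [:: [:: tK; tK ^+ 2; 1]; [:: tK ^+ 2; 1; tK]; [:: 1; tK; tK ^+ 2]] i) j.
Proof.
have h := tne0.
rewrite Aval /u /xK /zK -t3.
by case: i => [[|[|[|i]]] Hi] //; case: j => [[|[|[|j]]] Hj] //=; field.
Qed.

Lemma sink_eq : sinkhorn (A6 K) = diag_mx dvec *m Am *m diag_mx dvec.
Proof. exact: (xget_unique _ XAX_in sink_unique). Qed.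

Lemma sink_val : sinkhorn (A6 K) =
  mx3 (tK / sK) (tK ^+ 2 / sK) (1 / sK) (tK ^+ 2 / sK) (1 / sK) (tK / sK)
      (1 / sK) (tK / sK) (tK ^+ 2 / sK).
Proof.
rewrite sink_eq; apply/matrixP => i j; rewrite XAX_E XAX_g y2 /mx3 mxE.
by case: i => [[|[|[|i]]] Hi] //; case: j => [[|[|[|j]]] Hj] //=; rewrite mulrC.
Qed.

Lemma abc_eq :
  [/\ (tK ^+ 2 - tK) / (K - 1) = tK / sK, (K - tK ^+ 2) / (K - 1) = tK ^+ 2 / sK
    & (tK - 1) / (K - 1) = 1 / sK].
Proof.
have h1 : tK - 1 != 0 by rewrite subr_eq0 t_neq1.
have h2 : 1 + tK + tK ^+ 2 != 0 := lt0r_neq0 s_gt0.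
have e : K - 1 = (tK - 1) * sK by rewrite -t3 /sK; ring.
rewrite e -t3 /sK; split; field; by rewrite h1 h2.
Qed.
End SK.
Arguments tK {R}. Arguments sK {R}. Arguments yK {R}. Arguments xK {R}. Arguments zK {R}. Arguments u {R}. Arguments Am {R}. Arguments dvec {R}.
Arguments t_gt0 {R K}. Arguments t3 {R K}. Arguments s_gt0 {R K}. Arguments sink_val {R K}. Arguments sink_eq {R K}. Arguments abc_eq {R K}. Arguments altmin_cvg {R K}. Arguments XAX_g {R K}. Arguments y2 {R K}.

Section Lim.
Variable R : realType.

Lemma r_cvg : ((tK k)^-1 : R) @[k --> +oo] --> 0.
Proof.
apply/cvgr0Pnorm_lt => e e0.
have e3 : 0 < e ^+ 3 by rewrite exprn_gt0.
near=> k.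
have k1 : (e ^+ 3)^-1 < k by near: k; apply: nbhs_pinfty_gt; rewrite realE invr_ge0 ltW.
have k0 : 0 < k by apply: lt_trans k1; rewrite invr_gt0.
have t0 := t_gt0 k0.
rewrite ger0_norm ?invr_ge0 ?ltW //.
rewrite -(ltr_pXn2r (_ : 0 < 3)%N) ?nnegrE ?invr_ge0 ?ltW // exprVn (t3 k0).
rewrite -[(e ^+ 3)^-1]mul1r ltr_pdivrMr // in k1.
by rewrite -[k^-1]mul1r ltr_pdivrMr // mulrC.
Unshelve. all: by end_near.
Qed.

Lemma lim_a : ((tK k / sK k) : R) @[k --> +oo] --> 0.
Proof.
apply: (squeeze_cvgr _ (cvg_cst (0:R)) r_cvg).
  near=> k.
  have k0 : 0 < k by near: k; apply: nbhs_pinfty_gt; rewrite realE lexx.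
  have t0 := t_gt0 k0; have s0 := s_gt0 k0.
  apply/andP; split; first by rewrite divr_ge0 ?ltW.
  rewrite ler_pdivrMr // [X in _ <= X]mulrC ler_pdivlMr // /sK. nra.
Unshelve. all: by end_near.
Qed.

Lemma lim_c : ((1 / sK k) : R) @[k --> +oo] --> 0.
Proof.
apply: (squeeze_cvgr _ (cvg_cst (0:R)) r_cvg).
  near=> k.
  have k0 : 0 < k by near: k; apply: nbhs_pinfty_gt; rewrite realE lexx.
  have t0 := t_gt0 k0; have s0 := s_gt0 k0.
  apply/andP; split; first by rewrite divr_ge0 ?ltW.
  rewrite ler_pdivrMr // [X in _ <= X]mulrC ler_pdivlMr // /sK. nra.
Unshelve. all: by end_near.
Qed.

Lemma lim_b : ((tK k ^+ 2 / sK k) : R) @[k --> +oo] --> (1 : R).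
Proof.
have ev : {near (+oo : set_system R), (fun k : R => 1 - tK k / sK k - 1 / sK k) =1 (fun k => tK k ^+ 2 / sK k)}.
  near=> k.
  have k0 : 0 < k by near: k; apply: nbhs_pinfty_gt; rewrite realE lexx.
  have s0 := lt0r_neq0 (s_gt0 k0).
  move: s0; rewrite /sK => s0; field => //.
apply: cvg_trans (near_eq_cvg ev) _.
have H : (1 - tK k / sK k - 1 / sK k : R) @[k --> +oo] --> (1 - 0 - 0 : R).
  apply: cvgB; first apply: cvgB; [exact: cvg_cst | exact: lim_a | exact: lim_c].
by rewrite !subr0 in H.
Unshelve. all: by end_near.
Qed.
End Lim.

Lemma val_t {R : realType} {K : R} (hK0 : 0 < K) (hK1 : K != 1) :
  (K - 1) * yK K ^+ 2 + 1 = tK K.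
Proof.
have e : K - 1 = tK K ^+ 3 - 1 by rewrite t3.
rewrite y2 // e /sK.
have h : 1 + tK K + tK K ^+ 2 != 0 := lt0r_neq0 (s_gt0 hK0).
by field.
Qed.

Lemma shift_lim {R : realType} {K : R} (hK0 : 0 < K) (hK1 : K != 1) (i j : 'I_3) :
  u K i * Am K i j * u K j = yK K ^+ 2 ->
  ((K - 1) * altmin (A6 K) l i j + 1) @[l --> \oo] --> tK K.
Proof.
move=> hv.
rewrite -cvg_shiftS -(val_t hK0 hK1) -hv.
apply: cvgD; last exact: cvg_cst.
apply: cvgMr.
have := altmin_cvg hK0 i j.
have e : Am K i j * u K i * u K j = u K i * Am K i j * u K j by ring.
by rewrite e.
Qed.

Theorem mainTheorem11 (R : realType) (K : R) (hK0 : 0 < K) (hK1 : K != 1) :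
  let t := cbrt K in
  let y := (Num.sqrt (1 + t + t ^+ 2))^-1 in
  let x := y / t in
  let z := t * y in
  let X := diag_mx (\row_(i < 3) nth 0 [:: x; y; z] i) in
  let a := (t ^+ 2 - t) / (K - 1) in
  let b := (K - t ^+ 2) / (K - 1) in
  let c := (t - 1) / (K - 1) in
  (sinkhorn (A6 K) = X *m A6 K *m X) /\
     (
      sinkhorn (A6 K) = mx3 a b c b c a c a b) /\
     (
      ((K - 1) * altmin (A6 K) l i0 i2 + 1) @[l --> \oo] --> (t : R)) /\
     (      ((K - 1) * altmin (A6 K) l i1 i1 + 1) @[l --> \oo] --> (t : R)) /\
     (      ((K - 1) * altmin (A6 K) l i2 i0 + 1) @[l --> \oo] --> (t : R)) /\
     (      forall i j : 'I_3,
        sinkhorn (A6 k) i j @[k --> +oo] --> (mx3 0 1 0 1 0 0 0 0 1 : 'M[R]_3) i j).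
Proof.
move=> t y x z X a b c.
split; first exact: (sink_eq hK0).
split.
  have [ea eb ec] := abc_eq hK0 hK1.
  rewrite /a /b /c /t -/(tK K) ea eb ec; exact: (sink_val hK0).
split.
  apply: shift_lim => //; rewrite XAX_g //= mulr1 //.
split.
  apply: shift_lim => //; rewrite XAX_g //= mulr1 //.
split.
  apply: shift_lim => //; rewrite XAX_g //= mulr1 //.
move=> i j.
have ev : {near (+oo : set_system R),
  (fun k : R => nth 0 (nth [::] [:: [:: tK k / sK k; tK k ^+ 2 / sK k; 1 / sK k];
     [:: tK k ^+ 2 / sK k; 1 / sK k; tK k / sK k];
     [:: 1 / sK k; tK k / sK k; tK k ^+ 2 / sK k]] i) j) =1 (fun k => sinkhorn (A6 k) i j)}.
  near=> k.
  have k1 : 1 < k by near: k; apply: nbhs_pinfty_gt; rewrite realE ler01.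
  rewrite (sink_val (lt_trans ltr01 k1)) /mx3 mxE //.
apply: cvg_trans (near_eq_cvg ev) _; clear ev.
rewrite /mx3 mxE.
case: i => [[|[|[|i]]] Hi] //; case: j => [[|[|[|j]]] Hj] //=;
  (exact: lim_a || exact: lim_b || exact: lim_c).
Unshelve. all: by end_near.
Qed.
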